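(* Let $(V,d)$ be a finite metric space with root $r\in V$ and let $\pi$ be any master tour on $(V,d)$. Let $\{q_v\}_{v\in V}$ and $\{\bar p_v\}_{v\in V}$ be probabilities with $0\le q_v\le\bar p_v\le 1$ for each $v\in V$. Then the expected latency of $\pi$ when each vertex $v$ is independently active with probability $q_v$ is at most the expected latency of $\pi$ when each vertex $v$ is independently active with probability $\bar p_v$.
   Context: A master tour $\pi$ is a tour starting at the root $r$ visiting all vertices of $V$. For an active set $A\subseteq V$, $\pi_A$ visits the vertices of $A$ starting from $r$ in the order of $\pi$ (shortcutting inactive vertices); the latency of $v\in A$ is the length of the path from $r$ to $v$ along $\pi_A$. The expected latency of $\pi$ under probabilities $\{x_v\}$ is $\mathbb{E}_A[\sum_{v\in A}(\text{latency of }v\text{ in }\pi_A)]$ where $A$ contains each $v$ independently with probability $x_v$. *)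

(* Defs.v *)
From mathcomp Require Import all_boot all_order all_algebra.
Set Implicit Arguments. Unset Strict Implicit. Unset Printing Implicit Defensive.
Import Order.TTheory GRing.Theory Num.Theory.
Local Open Scope ring_scope.

Section Defs.
Variables (R : realFieldType) (V : finType).

Definition is_metric (d : V -> V -> R) : Prop :=
  [/\ forall x y, 0 <= d x y,
      forall x y, d x y = 0 <-> x = y,
      forall x y, d x y = d y x &
      forall x y z, d x z <= d x y + d y z].

(* a master tour: a tour starting at the root r visiting every vertex of V
   exactly once, given by its vertex order *)
Definition master_tour (r : V) (pi : seq V) : Prop :=
  [/\ head r pi = r, uniq pi & forall v : V, v \in pi].

Definition path_len (d : V -> V -> R) (x : V) (s : seq V) : R :=
  \sum_(e <- pairmap d x s) e.

(* the active vertices of A in the order of pi (shortcutting inactive ones) *)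
Definition tour_on (pi : seq V) (A : {set V}) : seq V :=
  [seq v <- pi | v \in A].

Definition latency (d : V -> V -> R) (r : V) (pi : seq V) (A : {set V})
    (v : V) : R :=
  let s := tour_on pi A in path_len d r (take (index v s).+1 s).

Definition set_prob (x : V -> R) (A : {set V}) : R :=
  \prod_(v in A) x v * \prod_(v in ~: A) (1 - x v).

Definition expected_latency (d : V -> V -> R) (r : V) (pi : seq V)
    (x : V -> R) : R :=
  \sum_(A : {set V}) set_prob x A * \sum_(v in A) latency d r pi A v.

End Defs.

(* Main.v *)
Require Import Defs.
From mathcomp Require Import all_boot all_order all_algebra.
From mathcomp Require Import ring.
Import Order.TTheory GRing.Theory Num.Theory.
Local Open Scope ring_scope.

Section Aux.
Variables (R : realFieldType) (V : finType).
Implicit Types (d : V -> V -> R).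

Lemma path_len_nil d x : path_len d x [::] = 0.
Proof. by rewrite /path_len big_nil. Qed.

Lemma path_len_cons d x y s : path_len d x (y :: s) = d x y + path_len d y s.
Proof. by rewrite /path_len /= big_cons. Qed.

Lemma path_len_ge0 d x s : (forall a b, 0 <= d a b) -> 0 <= path_len d x s.
Proof.
move=> h; elim: s x => [|y s IH] x; first by rewrite path_len_nil.
by rewrite path_len_cons addr_ge0.
Qed.

Lemma path_len_tri d x y s : (forall a b, 0 <= d a b) ->
  (forall a b c, d a c <= d a b + d b c) ->
  path_len d x s <= d x y + path_len d y s.
Proof.
move=> h0 ht; case: s => [|z s]; first by rewrite !path_len_nil addr0.
by rewrite !path_len_cons addrA lerD2r.
Qed.

Lemma path_len_mask d x m t : (forall a b, 0 <= d a b) ->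
  (forall a b c, d a c <= d a b + d b c) ->
  path_len d x (mask m t) <= path_len d x t.
Proof.
move=> h0 ht; elim: t m x => [|y t IH] m x; first by case: m.
case: m => [|b m]; first by rewrite /= path_len_nil path_len_ge0.
case: b => /=; rewrite !path_len_cons; first by rewrite lerD2l.
apply: le_trans (path_len_tri d x y _ h0 ht) _; by rewrite lerD2l IH.
Qed.

Lemma take_filter (P : pred V) (v : V) (pi : seq V) : P v ->
  take (index v (filter P pi)).+1 (filter P pi) = filter P (take (index v pi).+1 pi).
Proof.
move=> Pv; elim: pi => [|w pi IH] //=.
case: (eqVneq w v) => [->|wv]; first by rewrite Pv /= eqxx /= !take0.
case: (P w) => /=; last by rewrite IH.
by rewrite (negbTE wv) /= IH.
Qed.

Lemma latency_mono d r pi (A B : {set V}) v :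
  (forall a b, 0 <= d a b) -> (forall a b c, d a c <= d a b + d b c) ->
  A \subset B -> v \in A -> latency d r pi A v <= latency d r pi B v.
Proof.
move=> h0 ht AB vA; rewrite /latency /tour_on.
have vB : v \in B by apply: (subsetP AB).
rewrite (take_filter (fun x => x \in A)) // (take_filter (fun x => x \in B)) //.
set t := take _ pi.
have : subseq [seq x <- t | x \in A] [seq x <- t | x \in B].
  have -> : [seq x <- t | x \in A] = [seq x <- [seq x <- t | x \in B] | x \in A].
    rewrite -filter_predI; apply: eq_filter => x /=.
    by case xA: (x \in A); rewrite ?(subsetP AB x xA).
  exact: filter_subseq.
by case/subseqP => m _ ->; apply: path_len_mask.
Qed.

Definition totlat d r pi (A : {set V}) := \sum_(v in A) latency d r pi A v.

Lemma totlat_mono d r pi (A B : {set V}) :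
  (forall a b, 0 <= d a b) -> (forall a b c, d a c <= d a b + d b c) ->
  A \subset B -> totlat d r pi A <= totlat d r pi B.
Proof.
move=> h0 ht AB; rewrite /totlat.
apply: le_trans (_ : \sum_(v in A) latency d r pi B v <= _).
  by apply: ler_sum => v vA; apply: latency_mono.
rewrite [X in _ <= X](bigID (mem A)) /=.
have -> : \sum_(i in B | i \in A) latency d r pi B i = \sum_(i in A) latency d r pi B i.
  apply: eq_bigl => i /=; case iA: (i \in A); last by rewrite andbF.
  by rewrite (subsetP AB i iA).
rewrite lerDl; apply: sumr_ge0 => i _; exact: path_len_ge0.
Qed.

End Aux.

Section Prob.
Variables (R : realFieldType) (V : finType).

Definition cf (x : V -> R) (A : {set V}) v := if v \in A then x v else 1 - x v.

Lemma set_probE (x : V -> R) A : set_prob x A = \prod_v cf x A v.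
Proof.
rewrite /set_prob (bigID (mem A) predT) /=; congr (_ * _).
  by apply: eq_bigr => v vA; rewrite /cf vA.
apply: eq_big => [v|v]; first by rewrite in_setC.
by rewrite /cf in_setC => /negbTE ->.
Qed.

Definition tog (u : V) (A : {set V}) := if u \in A then A :\ u else u |: A.

Lemma tog_inv u : involutive (tog u).
Proof.
move=> A; rewrite /tog; case uA: (u \in A).
  by rewrite setD11 setD1K ?uA.
by rewrite setU11 setU1K ?uA.
Qed.

Lemma step (x y : V -> R) (u : V) (f : {set V} -> R) :
  (forall A B : {set V}, A \subset B -> f A <= f B) ->
  (forall v, v != u -> x v = y v) -> x u <= y u ->
  (forall v, 0 <= x v <= 1) ->
  \sum_(A : {set V}) set_prob x A * f A <= \sum_(A : {set V}) set_prob y A * f A.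
Proof.
move=> fm exy xy x01.
pose P A := \prod_(v | v != u) cf x A v.
have sp z A : (forall v, v != u -> z v = x v) -> set_prob z A = cf z A u * P A.
  move=> hz; rewrite set_probE (bigD1 u) //=; congr (_ * _).
  by apply: eq_bigr => v vu; rewrite /cf hz.
have P0 A : 0 <= P A.
  apply: prodr_ge0 => v _; rewrite /cf; case: (v \in A); case/andP: (x01 v) => // _.
  by rewrite subr_ge0.
have Ptog A : P (tog u A) = P A.
  apply: eq_bigr => v vu; rewrite /cf /tog; case: (u \in A).
    by rewrite in_setD1 vu.
  by rewrite in_setU1 (negbTE vu).
rewrite -subr_ge0 -sumrB.
have -> : \sum_(A : {set V}) (set_prob y A * f A - set_prob x A * f A) =
   \sum_(A : {set V}) (if u \in A then (y u - x u) else (x u - y u)) * (P A * f A).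
  apply: eq_bigr => A _; rewrite (sp y) ?(sp x) // => [|v /exy //].
  rewrite /cf; case: (u \in A); ring.
rewrite (bigID (fun A : {set V} => u \in A)) /=.
rewrite (eq_bigr (fun A => (y u - x u) * (P A * f A))); last by move=> A ->.
rewrite [X in _ + X](eq_bigr (fun A => - ((y u - x u) * (P A * f A)))); last first.
  by move=> A /negbTE ->; ring.
rewrite sumrN -!mulr_sumr -mulrBr mulr_ge0 ?subr_ge0 //.
rewrite (reindex_inj (inv_inj (tog_inv u))) /=.
rewrite (eq_bigl (fun A : {set V} => u \in A)); last first.
  by move=> A; rewrite /tog; case: (u \in A); rewrite ?setD11 ?setU11.
apply: ler_sum => A uA; rewrite Ptog ler_wpM2l //; apply: fm.
by rewrite /tog uA subsetDl.
Qed.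

End Prob.

Lemma set_prob_ext (R : realFieldType) (V : finType) (x y : V -> R) A :
  x =1 y -> set_prob x A = set_prob y A.
Proof. by move=> e; rewrite /set_prob; congr (_ * _); apply: eq_bigr => v _; rewrite e. Qed.

Theorem lemma2 (R : realFieldType) (V : finType) (d : V -> V -> R) (r : V)
    (pi : seq V) (q pbar : V -> R) :
  is_metric d -> master_tour r pi ->
  (forall v, 0 <= q v) -> (forall v, q v <= pbar v) -> (forall v, pbar v <= 1) ->
  expected_latency d r pi q <= expected_latency d r pi pbar.
Proof.
case=> h0 _ _ ht _ q0 qp p1.
pose z (s : seq V) v := if v \in s then pbar v else q v.
have ext x y : x =1 y -> expected_latency d r pi x = expected_latency d r pi y.
  by move=> e; apply: eq_bigr => A _; rewrite (@set_prob_ext _ _ x y A e).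
have z01 s v : 0 <= z s v <= 1.
  rewrite /z; case: (v \in s); apply/andP; split.
  - exact: le_trans (q0 v) (qp v).
  - exact: p1.
  - exact: q0.
  - exact: le_trans (qp v) (p1 v).
have H s : expected_latency d r pi q <= expected_latency d r pi (z s).
  elim: s => [|u s IH]; first by rewrite (ext _ (z [::])).
  apply: (le_trans IH).
  apply: (@step _ _ (z s) (z (u :: s)) u (@totlat _ _ d r pi) _ _ _ (z01 s) : expected_latency d r pi (z s) <= expected_latency d r pi (z (u :: s))).
  - by move=> A B; apply: totlat_mono.
  - by move=> v vu; rewrite /z in_cons (negbTE vu).
  - by rewrite /z in_cons eqxx; case: (u \in s).
rewrite (ext pbar (z (enum V))) // => v; by rewrite /z mem_enum.
Qed.
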